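(* There exists no simple, locally finite lattice $S$ with more than two elements such that every finite sublattice of $S$ satisfies $(\mathrm{T}_\vee)$.
   Context: A lattice is simple if its only congruences are the identity and the total congruence. It is locally finite if every finitely generated sublattice is finite. For a finite lattice $A$, let $\mathrm{J}(A)$ be its set of join-irreducible elements; for $q\in\mathrm{J}(A)$ let $q_*$ be its unique lower cover. The join-dependency relation $D_A$ on $\mathrm{J}(A)$ is defined by: $p\,D_A\,q$ iff $p\neq q$ and there exists $x\in A$ with $p\leq q\vee x$ and $p\nleq q_*\vee x$. A finite lattice $A$ satisfies $(\mathrm{T}_\vee)$ if $D_A$ has no cycle. *)

(* Defs.v *)
From HB Require Import structures.
From mathcomp Require Import all_boot all_order.
Set Implicit Arguments. Unset Strict Implicit. Unset Printing Implicit Defensive.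
Import Order.Theory.
Local Open Scope order_scope.

Section LatticeDefs.
Context {disp : Order.disp_t} {T : latticeType disp}.

Definition lattice_congruence (th : T -> T -> Prop) : Prop :=
  (forall x, th x x) /\ (forall x y, th x y -> th y x) /\
  (forall x y z, th x y -> th y z -> th x z) /\
  (forall x y x' y', th x x' -> th y y' -> th (x `&` y) (x' `&` y')) /\
  (forall x y x' y', th x x' -> th y y' -> th (x `|` y) (x' `|` y')).

Definition simple_lattice : Prop :=
  forall th, lattice_congruence th ->
    (forall x y, th x y <-> x = y) \/ (forall x y, th x y).

Inductive gen_sublattice (X : seq T) : T -> Prop :=
| gen_base x : x \in X -> gen_sublattice X x
| gen_meet x y : gen_sublattice X x -> gen_sublattice X y -> gen_sublattice X (x `&` y)
| gen_join x y : gen_sublattice X x -> gen_sublattice X y -> gen_sublattice X (x `|` y).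

Definition finite_set (P : T -> Prop) : Prop :=
  exists s : seq T, forall x, P x -> x \in s.

Definition locally_finite : Prop :=
  forall X : seq T, finite_set (gen_sublattice X).

Definition is_sublattice (A : seq T) : Prop :=
  A <> [::] /\
  (forall x y, x \in A -> y \in A -> x `&` y \in A) /\
  (forall x y, x \in A -> y \in A -> x `|` y \in A).

Definition join_irr (A : seq T) (q : T) : Prop :=
  q \in A /\ (exists a, a \in A /\ ~ (q <= a)) /\
  (forall x y, x \in A -> y \in A -> q = x `|` y -> q = x \/ q = y).

Definition lower_cover (A : seq T) (q c : T) : Prop :=
  c \in A /\ c < q /\ (forall z, z \in A -> c < z -> ~ (z < q)).

Definition join_dep (A : seq T) (p q : T) : Prop :=
  join_irr A p /\ join_irr A q /\ p <> q /\
  exists qs, lower_cover A q qs /\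
    exists x, x \in A /\ p <= q `|` x /\ ~ (p <= qs `|` x).

Definition has_cycle (R : T -> T -> Prop) : Prop :=
  exists (n : nat) (f : nat -> T),
    (0 < n)%N /\ (forall i, (i < n)%N -> R (f i) (f i.+1)) /\ f n = f 0%N.

Definition satisfies_Tjoin (A : seq T) : Prop := ~ has_cycle (join_dep A).

Definition more_than_two : Prop :=
  exists a b c : T, a <> b /\ a <> c /\ b <> c.

End LatticeDefs.

(* Main.v *)
Require Import Defs.
From HB Require Import structures.
From mathcomp Require Import all_boot all_order.
From mathcomp Require Import zify.
From Stdlib Require Import Classical ClassicalEpsilon.
Set Implicit Arguments. Unset Strict Implicit. Unset Printing Implicit Defensive.
Import Order.Theory.
Local Open Scope order_scope.

Section Proof.
Context {disp : Order.disp_t} {T : latticeType disp}.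
Implicit Types (A : seq T) (a b p q x y z : T).

Definition pb (P : Prop) : bool := if excluded_middle_informative P then true else false.
Lemma pbP P : reflect P (pb P).
Proof. rewrite /pb; case: excluded_middle_informative => h; constructor; done. Qed.

Lemma exists_min (R : T -> T -> Prop) (P : T -> Prop) (s : seq T) :
  (forall a b c, R a b -> R b c -> R a c) -> (forall a, ~ R a a) ->
  (exists x, x \in s /\ P x) ->
  exists m, [/\ m \in s, P m & forall y, y \in s -> P y -> ~ R y m].
Proof.
move=> Rt Ri; elim: s => [|a s IH] [x [xs Px]]; first by rewrite in_nil in xs.
case: (classic (exists x, x \in s /\ P x)) => [/IH [m [ms Pm mmin]]|nos].
- case: (classic (P a /\ R a m)) => [[Pa Ram]|nam].
  + exists a; split => //; first by rewrite inE eqxx.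
    move=> y; rewrite inE => /orP [/eqP -> _|ys Py Rya]; first exact: Ri.
    exact: (mmin y ys Py (Rt _ _ _ Rya Ram)).
  + exists m; split => //; first by rewrite inE ms orbT.
    move=> y; rewrite inE => /orP [/eqP -> Pa Ram|]; [by apply: nam | exact: mmin].
- move: xs; rewrite inE => /orP [/eqP xa|xs]; last by exfalso; apply: nos; exists x.
  subst x. exists a; split => //; first by rewrite inE eqxx.
  move=> y; rewrite inE => /orP [/eqP -> _|ys Py]; first exact: Ri.
  by exfalso; apply: nos; exists y.
Qed.

Lemma exists_minlt (P : T -> Prop) (s : seq T) : (exists x, x \in s /\ P x) ->
  exists m, [/\ m \in s, P m & forall y, y \in s -> P y -> ~ (y < m)].
Proof.
apply: exists_min; [move=> a b c; exact: lt_trans | by move=> a; rewrite ltxx].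
Qed.

Lemma exists_maxlt (P : T -> Prop) (s : seq T) : (exists x, x \in s /\ P x) ->
  exists m, [/\ m \in s, P m & forall y, y \in s -> P y -> ~ (m < y)].
Proof.
apply: (@exists_min (fun a b => b < a)); [move=> a b c h1 h2; exact: lt_trans h2 h1 | by move=> a; rewrite ltxx].
Qed.

Lemma ji_below A a b : is_sublattice A -> a \in A -> b \in A -> ~ (a <= b) ->
  exists q, [/\ q \in A, q <= a, ~ (q <= b), join_irr A q &
    forall t, t \in A -> t < q -> t <= b].
Proof.
move=> [_ [HI HU]] aA bA nab.
have [q [qA [qa nqb] qmin]] := @exists_minlt (fun q => q <= a /\ ~ (q <= b)) A
  (ex_intro _ a (conj aA (conj (lexx a) nab))).
have below : forall t, t \in A -> t < q -> t <= b.
  move=> t tA tq; case: (boolP (t <= b)) => // /negP ntb.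
  by exfalso; apply: (qmin t tA _ tq); split => //; exact: le_trans (ltW tq) qa.
exists q; split => //; split => //; split; first by exists b.
move=> s t sA tA qst.
case: (eqVneq q s) => [->|nqs]; first by left.
case: (eqVneq q t) => [->|nqt]; first by right.
exfalso; apply: nqb; rewrite qst leUx; apply/andP; split; apply: below => //.
- by rewrite lt_def nqs /= qst leUl.
- by rewrite lt_def nqt /= qst leUr.
Qed.


Definition acong A (th : T -> T -> Prop) :=
 [/\ forall x, x \in A -> th x x,
     forall x y, x \in A -> y \in A -> th x y -> th y x,
     forall x y z, x \in A -> y \in A -> z \in A -> th x y -> th y z -> th x z,
     forall x y x' y', x \in A -> y \in A -> x' \in A -> y' \in A ->
        th x x' -> th y y' -> th (x `&` y) (x' `&` y') &
     forall x y x' y', x \in A -> y \in A -> x' \in A -> y' \in A ->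
        th x x' -> th y y' -> th (x `|` y) (x' `|` y')].

Definition phiK (K : T -> Prop) x y := forall q, K q -> (q <= x <-> q <= y).

Lemma key A (K : T -> Prop) x x' y p : is_sublattice A ->
  x \in A -> x' \in A -> y \in A ->
  (forall q, K q -> join_irr A q) ->
  (forall p q, K p -> join_dep A p q -> K q) ->
  x' <= x -> phiK K x x' -> K p -> p <= x `|` y -> p <= x' `|` y.
Proof.
move=> HA xA x'A yA KJ Kcl x'x Hxx' Kp pxy.
have [_ [HI HU]] := HA.
have [z [zA [x'z [zx pzy]] zmin]] := @exists_minlt
  (fun z => x' <= z /\ z <= x /\ p <= z `|` y) A
  (ex_intro _ x (conj xA (conj x'x (conj (lexx x) pxy)))).
case: (eqVneq z x') => [<-|nzx'] //.
have x'ltz : x' < z by rewrite lt_def nzx' x'z.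
have [z0 [z0A [x'z0 z0z] z0max]] := @exists_maxlt
  (fun t => x' <= t /\ t < z) A (ex_intro _ x' (conj x'A (conj (lexx x') x'ltz))).
have z0x : z0 <= x by exact: le_trans (ltW z0z) zx.
have npz0 : ~ (p <= z0 `|` y).
  by move=> h; apply: (zmin z0 z0A _ z0z); split => //; split.
have nzz0 : ~ (z <= z0) by move=> h; move: (lt_le_trans z0z h); rewrite ltxx.
have [q [qA qz nqz0 Jq qbel]] := ji_below HA zA z0A nzz0.
have qz0z : q `|` z0 = z.
  case: (eqVneq (q `|` z0) z) => // ne; exfalso.
  have lt1 : q `|` z0 < z by rewrite lt_def eq_sym ne leUx qz (ltW z0z).
  apply: (z0max (q `|` z0) (HU _ _ qA z0A)).
    by split => //; exact: le_trans x'z0 (leUr _ _).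
  rewrite lt_def leUr andbT; apply/eqP => e; apply: nqz0; rewrite -e; exact: leUl.
have qmz0 : q `&` z0 < q.
  rewrite lt_def leIl andbT; apply/eqP => e; apply: nqz0; rewrite e; exact: leIr.
have [r [rA [qr rq] rmax]] := @exists_maxlt
  (fun t => q `&` z0 <= t /\ t < q) A
  (ex_intro _ (q `&` z0) (conj (HI _ _ qA z0A) (conj (lexx _) qmz0))).
have rz0 : r <= z0 by exact: qbel.
have Kq : K q.
  case: (eqVneq p q) => [<-|npq] //.
  apply: (Kcl p q Kp); split; first exact: KJ.
  split => //; split; first exact/eqP.
  exists r; split.
    split => //; split => // t tA rt tq.
    by apply: (rmax t tA _ rt); split => //; exact: le_trans qr (ltW rt).
  exists (z0 `|` y); split; first exact: HU.
  split; first by rewrite joinA qz0z.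
  move=> h; apply: npz0; apply: le_trans h _.
  rewrite leUx lexx andbT; exact: le_trans rz0 (leUl _ _).
exfalso; apply: nqz0; apply: le_trans x'z0.
by apply/(Hxx' q Kq); exact: le_trans qz zx.
Qed.


Lemma phiK_half A (K : T -> Prop) x y x' y' p : is_sublattice A ->
  x \in A -> y \in A -> x' \in A -> y' \in A ->
  (forall q, K q -> join_irr A q) ->
  (forall p q, K p -> join_dep A p q -> K q) ->
  phiK K x x' -> phiK K y y' -> K p -> p <= x `|` y -> p <= x' `|` y'.
Proof.
move=> HA xA yA x'A y'A KJ Kcl hx hy Kp h.
have [_ [HI HU]] := HA.
have h1 : p <= (x `&` x') `|` y.
  apply: (key HA xA (HI _ _ xA x'A) yA KJ Kcl (leIl _ _)) => // q Kq.
  rewrite lexI; split; [move=> qx; rewrite qx /=; exact/(hx q Kq) | by case/andP].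
have h2 : p <= x' `|` y by apply: le_trans h1 _; apply: leU2; [exact: leIr | exact: lexx].
rewrite joinC in h2 *.
have h3 : p <= (y `&` y') `|` x'.
  apply: (key HA yA (HI _ _ yA y'A) x'A KJ Kcl (leIl _ _)) => // q Kq.
  rewrite lexI; split; [move=> qx; rewrite qx /=; exact/(hy q Kq) | by case/andP].
apply: le_trans h3 _; rewrite leUx; apply/andP; split;
  [exact: le_trans (leIr _ _) (leUr _ _) | exact: leUl].
Qed.

Lemma phiK_cong A (K : T -> Prop) : is_sublattice A ->
  (forall q, K q -> join_irr A q) ->
  (forall p q, K p -> join_dep A p q -> K q) -> acong A (phiK K).
Proof.
move=> HA KJ Kcl; split.
- by move=> x _ q _.
- by move=> x y _ _ h q Kq; split => /(h q Kq).
- by move=> x y z _ _ _ h1 h2 q Kq; split => [/(h1 q Kq)/(h2 q Kq)|/(h2 q Kq)/(h1 q Kq)].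
- move=> x y x' y' _ _ _ _ h1 h2 q Kq; rewrite !lexI.
  by split => /andP [a b]; apply/andP; split; [exact/(h1 q Kq)|exact/(h2 q Kq)|exact/(h1 q Kq)|exact/(h2 q Kq)].
- move=> x y x' y' xA yA x'A y'A h1 h2 q Kq; split.
  + exact: (phiK_half HA xA yA x'A y'A KJ Kcl h1 h2 Kq).
  + apply: (phiK_half HA x'A y'A xA yA KJ Kcl _ _ Kq).
    * by move=> r Kr; split => /(h1 r Kr).
    * by move=> r Kr; split => /(h2 r Kr).
Qed.

Definition reachn (R : T -> T -> Prop) n p q := exists f : nat -> T,
  [/\ f 0%N = p, f n = q & forall i, (i < n)%N -> R (f i) (f i.+1)].

Lemma reach_trans R n m p q r : reachn R n p q -> reachn R m q r -> reachn R (n + m) p r.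
Proof.
move=> [f [f0 fn fR]] [g [g0 gm gR]].
exists (fun i => if (i <= n)%N then f i else g (i - n)%N); split.
- by rewrite leq0n.
- case: ifP => h.
    have m0 : m = 0%N by lia.
    by subst m; rewrite addn0 fn -gm g0.
  by rewrite addKn.
- move=> i lti /=; case: (ltngtP i n) => hin.
  + exact: fR.
  + have -> : (i.+1 - n = (i - n).+1)%N by lia.
    apply: gR; lia.
  + subst i; rewrite subSnn fn -g0; apply: gR; lia.
Qed.

Lemma reach0 R p : reachn R 0 p p.
Proof. by exists (fun _ => p); split. Qed.

Lemma reach1 R p q : R p q -> reachn R 1 p q.
Proof. by move=> h; exists (fun i => if i is 0%N then p else q); split => // [[|i]]. Qed.

Lemma reach_end R n p q : reachn R n p q -> (n = 0%N /\ p = q) \/ exists p', R p' q.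
Proof.
case: n => [|n] [f [f0 fn fR]]; first by left; rewrite -f0 -fn.
by right; exists (f n); rewrite -fn; apply: fR.
Qed.

Lemma count_le (a b : pred T) s : (forall x, x \in s -> a x -> b x) ->
  (count a s <= count b s)%N.
Proof.
elim: s => [|y s IH] //= h.
have hy := h y (mem_head _ _).
have := IH (fun x xs => h x (mem_behead (s:=y::s) xs)).
case ay: (a y); case by_: (b y) => /=; try lia.
all: by move: (hy ay); rewrite by_.
Qed.

Lemma count_lt (a b : pred T) s : (forall x, x \in s -> a x -> b x) ->
  (exists2 x, x \in s & b x && ~~ a x) -> (count a s < count b s)%N.
Proof.
elim: s => [|y s IH] h [x xs bx] //=.
have hs : forall x, x \in s -> a x -> b x by move=> z zs; apply: h; rewrite inE zs orbT.
move: xs; rewrite inE => /orP [/eqP e|xs].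
- subst x; move/andP: bx => [-> /negbTE ->] /=.
  have := count_le hs; lia.
- have := IH hs (ex_intro2 _ _ x xs bx).
  have hy := h y (mem_head _ _).
  case ay: (a y); case by_: (b y) => /=; try lia.
  all: by move: (hy ay); rewrite by_.
Qed.

Lemma step2 A u v w : is_sublattice A -> ~ has_cycle (join_dep A) ->
  u \in A -> v \in A -> w \in A -> u < v -> v < w ->
  exists phi, acong A phi /\ ((phi v w /\ ~ phi u v) \/ (phi u v /\ ~ phi v w)).
Proof.
move=> HA nc uA vA wA uv vw.
pose D := join_dep A.
pose X p := join_irr A p /\ p <= v /\ ~ (p <= u).
pose Y p := join_irr A p /\ p <= w /\ ~ (p <= v).
pose reach p q := exists n, reachn D n p q.
pose good p0 := (X p0 /\ forall q, reach p0 q -> ~ Y q) \/ (Y p0 /\ forall q, reach p0 q -> ~ X q).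
pose mu p := count (fun r => pb (reach p r)) A.
have mu_lt : forall p q n, p \in A -> reachn D n p q -> (0 < n)%N -> (mu q < mu p)%N.
  move=> p q n pA pq n0; apply: count_lt.
  - move=> r _ /pbP [m qr]; apply/pbP; exists (n + m)%N; exact: reach_trans pq qr.
  - exists p => //; apply/andP; split; first by apply/pbP; exists 0%N; exact: reach0.
    apply/negP => /pbP [m qp]; apply: nc.
    have [f [f0 fn fR]] := reach_trans pq qp.
    exists (n + m)%N, f; split => //; first lia.
    by rewrite fn f0.
have stepg : forall p, X p \/ Y p -> good p \/ exists q, (X q \/ Y q) /\ (mu q < mu p)%N.
  move=> p [Xp|Yp].
  - case: (classic (exists q, reach p q /\ Y q)) => [[q [[n pq] Yq]]|nq].
      right; exists q; split; first by right.
      apply: (mu_lt p q n) => //; first by case: Xp => [[]].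
      case: n pq => [|n] // [f [f0 fn _]].
      exfalso; case: Yq => [_ [_]]; apply; rewrite -fn f0; by case: Xp => [_ []].
    left; left; split => // q pq Yq; apply: nq; by exists q.
  - case: (classic (exists q, reach p q /\ X q)) => [[q [[n pq] Xq]]|nq].
      right; exists q; split; first by left.
      apply: (mu_lt p q n) => //; first by case: Yp => [[]].
      case: n pq => [|n] // [f [f0 fn _]].
      exfalso; case: Yp => [_ [_]]; apply; rewrite -f0 fn; by case: Xq => [_ []].
    left; right; split => // q pq Xq; apply: nq; by exists q.
have [p0 gp0] : exists p0, good p0.
  have nvu : ~ (v <= u) by move=> h; move: (lt_le_trans uv h); rewrite ltxx.
  have [q [qA qv nqu Jq _]] := ji_below HA vA uA nvu.
  have : X q \/ Y q by left.
  move: {qA qv nqu Jq} q; suff : forall N q, (mu q <= N)%N -> X q \/ Y q -> exists p0, good p0.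
    by move=> h q; exact: (h (mu q) q (leqnn _)).
  elim=> [|N IH] q hmu hq; case: (stepg q hq) => [g|[q' [hq' lt]]]; try by exists q.
  - by move: lt; rewrite ltnNge (leq_trans hmu (leq0n _)) /=; lia.
  - apply: (IH q') => //; lia.
pose K := reach p0.
have KJ : forall q, K q -> join_irr A q.
  move=> q [n pq]; case: (reach_end pq) => [[_ <-]|[p' [_ [Jq _]]]] //.
  by case: gp0 => [[[]]|[[]]].
have Kcl : forall p q, K p -> join_dep A p q -> K q.
  move=> p q [n pp] Dpq; exists (n + 1)%N; apply: reach_trans pp (reach1 Dpq).
have Kp0 : K p0 by exists 0%N; exact: reach0.
exists (phiK K); split; first exact: phiK_cong.
case: gp0 => [[[_ [p0v np0u]] nY]|[[_ [p0w np0v]] nX]].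
- left; split.
  + move=> q Kq; split => [qv|qw]; first exact: le_trans qv (ltW vw).
    case: (boolP (q <= v)) => // /negP nqv; exfalso; apply: (nY q Kq).
    by split; [exact: KJ|split].
  + by move=> h; apply: np0u; apply/(h p0 Kp0).
- right; split.
  + move=> q Kq; split => [qu|qv]; first exact: le_trans qu (ltW uv).
    case: (boolP (q <= u)) => // /negP nqu; exfalso; apply: (nX q Kq).
    by split; [exact: KJ|split].
  + by move=> h; apply: np0v; apply/(h p0 Kp0).
Qed.

Lemma closure_ex (X : seq T) : locally_finite (T:=T) -> X <> [::] ->
  exists A, is_sublattice A /\ forall x, x \in X -> x \in A.
Proof.
move=> L nX; have [s hs] := L X.
pose A := [seq x <- s | pb (gen_sublattice X x)].
have memA : forall x, x \in A <-> gen_sublattice X x.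
  move=> x; rewrite mem_filter; split => [/andP [/pbP //]|g].
  by apply/andP; split; [apply/pbP|exact: hs].
exists A; split; last by move=> x xX; apply/memA; exact: gen_base.
split.
  have [x0 x0X] : exists x0, x0 \in X by case: (X) nX => [//|x0 X'] _; exists x0; exact: mem_head.
  move=> eA; have : x0 \in A by apply/memA; exact: gen_base.
  by rewrite eA.
split => x y /memA hx /memA hy; apply/memA; [exact: gen_meet | exact: gen_join].
Qed.

Definition theta (a b : T) x y := exists A,
  [/\ is_sublattice A, x \in A, y \in A & forall phi, acong A phi -> phi a b -> phi x y].

Lemma acong_sub A A' phi : {subset A <= A'} -> acong A' phi -> acong A phi.
Proof.
move=> sub [h1 h2 h3 h4 h5]; split.
- by move=> x xA; apply: h1; apply: sub.
- by move=> x y xA yA; apply: h2; apply: sub.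
- by move=> x y z xA yA zA; apply: h3; apply: sub.
- by move=> x y x' y' xA yA x'A y'A; apply: h4; apply: sub.
- by move=> x y x' y' xA yA x'A y'A; apply: h5; apply: sub.
Qed.

Lemma theta_cong a b : locally_finite (T:=T) -> lattice_congruence (theta a b).
Proof.
move=> L.
have join2 : forall A1 A2, is_sublattice A1 -> exists A3, is_sublattice A3 /\
    {subset A1 <= A3} /\ {subset A2 <= A3}.
  move=> A1 A2 [ne _].
  have ne' : A1 ++ A2 <> [::] by case: (A1) ne.
  have [A3 [H3 s3]] := closure_ex L ne'.
  exists A3; split => //; split => x xA; apply: s3; rewrite mem_cat xA ?orbT //.
split.
  move=> x; have [A [HA sA]] := closure_ex (X:=[:: x]) L ltac:(done).
  have xA : x \in A by apply: sA; exact: mem_head.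
  exists A; split => // phi [h1 _ _ _ _] _; exact: h1 x xA.
split.
  move=> x y [A [HA xA yA h]]; exists A; split => // phi hp pab.
  by case: (hp) => [_ h2 _ _ _]; apply: h2 => //; exact: h phi hp pab.
split.
  move=> x y z [A1 [H1 xA yA h]] [A2 [H2 yA' zA h']].
  have [A3 [H3 [s1 s2]]] := join2 A1 A2 H1.
  exists A3; split; [done | exact: s1 | exact: s2 |].
  move=> phi hp pab; case: (hp) => [_ _ h3 _ _].
  apply: (h3 x y z (s1 _ xA) (s1 _ yA) (s2 _ zA)).
  - exact: h phi (acong_sub s1 hp) pab.
  - exact: h' phi (acong_sub s2 hp) pab.
split.
  move=> x y x' y' [A1 [H1 xA x'A h]] [A2 [H2 yA y'A h']].
  have [A3 [H3 [s1 s2]]] := join2 A1 A2 H1.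
  have [_ [HI HU]] := H3.
  exists A3; split; [done | apply: HI; [exact: s1|exact: s2] | apply: HI; [exact: s1|exact: s2] |].
  move=> phi hp pab; case: (hp) => [_ _ _ h4 _].
  apply: h4; [exact: s1|exact: s2|exact: s1|exact: s2| |].
  - exact: h phi (acong_sub s1 hp) pab.
  - exact: h' phi (acong_sub s2 hp) pab.
move=> x y x' y' [A1 [H1 xA x'A h]] [A2 [H2 yA y'A h']].
have [A3 [H3 [s1 s2]]] := join2 A1 A2 H1.
have [_ [HI HU]] := H3.
exists A3; split; [done | apply: HU; [exact: s1|exact: s2] | apply: HU; [exact: s1|exact: s2] |].
move=> phi hp pab; case: (hp) => [_ _ _ _ h5].
apply: h5; [exact: s1|exact: s2|exact: s1|exact: s2| |].
- exact: h phi (acong_sub s1 hp) pab.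
- exact: h' phi (acong_sub s2 hp) pab.
Qed.

Lemma theta_self a b : locally_finite (T:=T) -> theta a b a b.
Proof.
move=> L; have [A [HA sA]] := closure_ex (X:=[:: a; b]) L ltac:(done).
by exists A; split => //; apply: sA; rewrite !inE eqxx ?orbT.
Qed.

Lemma chain3 x y z : x <> y -> y <> z -> x <= y -> y <= z ->
  exists u v w : T, u < v /\ v < w.
Proof.
move=> nxy nyz xy yz; exists x, y, z.
by rewrite !lt_neqAle xy yz !andbT; split; apply/eqP.
Qed.

Lemma incomp3 x y : ~~ (x <= y) -> ~~ (y <= x) -> exists u v w : T, u < v /\ v < w.
Proof.
move=> nxy nyx; exists (x `&` y), x, (x `|` y); split.
- rewrite lt_neqAle leIl andbT; apply/eqP => e; move: nxy; rewrite -e leIr.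
  done.
- rewrite lt_neqAle leUl andbT; apply/eqP => e; move: nyx; rewrite e leUr.
  done.
Qed.

Lemma get_chain : more_than_two (T:=T) -> exists u v w : T, u < v /\ v < w.
Proof.
move=> [a [b [c [nab [nac nbc]]]]].
have nba : b <> a by move=> e; apply: nab.
have nca : c <> a by move=> e; apply: nac.
have ncb : c <> b by move=> e; apply: nbc.
case: (boolP (a <= b)) => ab; case: (boolP (b <= a)) => ba;
  try (by exfalso; apply: nab; apply: le_anti; rewrite ab ba);
  try (by apply: incomp3 ab ba);
case: (boolP (a <= c)) => ac; case: (boolP (c <= a)) => ca;
  try (by exfalso; apply: nac; apply: le_anti; rewrite ac ca);
  try (by apply: incomp3 ac ca);
case: (boolP (b <= c)) => bc; case: (boolP (c <= b)) => cb;
  try (by exfalso; apply: nbc; apply: le_anti; rewrite bc cb);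
  try (by apply: incomp3 bc cb);
  first [ exact: (chain3 nab nbc ab bc) | exact: (chain3 nac ncb ac cb)
        | exact: (chain3 nba nac ba ac) | exact: (chain3 nbc nca bc ca)
        | exact: (chain3 nca nab ca ab) | exact: (chain3 ncb nba cb ba) ].
Qed.

End Proof.

Theorem theorem6p1 :
  forall (disp : Order.disp_t) (S : latticeType disp),
    ~ (@simple_lattice disp S /\ @locally_finite disp S /\ @more_than_two disp S /\
       forall A : seq S, is_sublattice A -> satisfies_Tjoin A).
Proof.
move=> disp S [Hs [Hl [Hm HT]]].
have [u [v [w [uv vw]]]] := get_chain Hm.
have t1 : theta v w u v.
  case: (Hs _ (theta_cong v w Hl)) => [Hid|Htot]; last exact: Htot.
  have := theta_self v w Hl; move/Hid => e; by rewrite e ltxx in vw.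
have t2 : theta u v v w.
  case: (Hs _ (theta_cong u v Hl)) => [Hid|Htot]; last exact: Htot.
  have := theta_self u v Hl; move/Hid => e; by rewrite e ltxx in uv.
case: t1 => [A1 [H1 _ _ h1]]; case: t2 => [A2 [H2 _ _ h2]].
have [A3 [H3 s3]] := closure_ex (X:=[:: u, v, w & A1 ++ A2]) Hl ltac:(done).
have uA : u \in A3 by apply: s3; rewrite !inE eqxx.
have vA : v \in A3 by apply: s3; rewrite !inE eqxx ?orbT.
have wA : w \in A3 by apply: s3; rewrite !inE eqxx ?orbT.
have sA1 : {subset A1 <= A3} by move=> x xA; apply: s3; rewrite !inE mem_cat xA ?orbT.
have sA2 : {subset A2 <= A3} by move=> x xA; apply: s3; rewrite !inE mem_cat xA ?orbT.
have [phi [hp [[pvw npuv]|[puv npvw]]]] := step2 H3 (HT A3 H3) uA vA wA uv vw.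
- by apply: npuv; apply: (h1 phi (acong_sub sA1 hp) pvw).
- by apply: npvw; apply: (h2 phi (acong_sub sA2 hp) puv).
Qed.
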